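(* Let $N,n\ge1$ and let $C(\rho)$ be a matrix with $n$ columns whose entries are polynomials with rational coefficients in $\rho\in\mathbb{R}^N$. Fix a linear way of arranging the entries of a vector $m\in\mathbb{R}^n$ as the entries of a matrix $M=M(m)$. Suppose that for some generic $\rho_0\in\mathbb{R}^N$ there is $m_0$ with $C(\rho_0)m_0=0$ and $\operatorname{rank}M(m_0)=s$. Then for every generic $\rho\in\mathbb{R}^N$ there is $m$ with $C(\rho)m=0$ and $\operatorname{rank}M(m)\ge s$.
   Context: A point $\rho\in\mathbb{R}^N$ is generic if its coordinates satisfy no nonzero polynomial equation with rational coefficients. The arrangement $m\mapsto M(m)$ places each entry of $m$ in a fixed position of the matrix $M$ (the same for all $m$). *)

(* Defs.v *)
From HB Require Import structures.
From mathcomp Require Import all_boot all_order all_algebra.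
From mathcomp Require Import reals.
From mathcomp Require Import mpoly.
Set Implicit Arguments. Unset Strict Implicit. Unset Printing Implicit Defensive.
Import Order.TTheory GRing.Theory Num.Theory.
Local Open Scope ring_scope.

Definition evalQ (R : realType) (N : nat) (rho : 'I_N -> R) (P : {mpoly rat[N]}) : R :=
  (map_mpoly (ratr : rat -> R) P).@[rho].

Definition generic (R : realType) (N : nat) (rho : 'I_N -> R) : Prop :=
  forall P : {mpoly rat[N]}, P != 0 -> evalQ rho P != 0.

Definition evalmx (R : realType) (N k n : nat) (C : 'M[{mpoly rat[N]}]_(k, n))
  (rho : 'I_N -> R) : 'M[R]_(k, n) := map_mx (evalQ rho) C.

Definition arrange (R : realType) (n p q : nat) (pos : 'I_n -> 'I_p * 'I_q)
  (m : 'cV[R]_n) : 'M[R]_(p, q) :=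
  \matrix_(i < p, j < q) \sum_(l < n | pos l == (i, j)) m l 0.

(* Main.v *)
Require Import Defs.
From HB Require Import structures.
From mathcomp Require Import all_boot all_order all_algebra.
From mathcomp Require Import reals.
From mathcomp Require Import mpoly.
From mathcomp Require Import ring zify.
Set Implicit Arguments. Unset Strict Implicit. Unset Printing Implicit Defensive.
Import Order.TTheory GRing.Theory Num.Theory.
Local Open Scope ring_scope.
Local Open Scope quotient_scope.
Local Notation "x %:F" := (@FracField.tofrac _ x) .

Lemma frac_repr (D : idomainType) (x : {fraction D}) :
  exists a b : D, b != 0 /\ x = a%:F / b%:F.
Proof.
exists (repr x).1, (repr x).2; split; first exact: denom_ratioP.
rewrite -[x in LHS]reprK.
set r := repr x.
Set Printing All.
unlock FracField.tofrac.
Unset Printing All.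
rewrite /GRing.mul /= /GRing.inv /=.
rewrite -FracField.pi_inv -FracField.pi_mul.
apply/eqmodP; rewrite /= FracField.equivfE /FracField.mulf /FracField.invf /=.
rewrite !numden_Ratio ?oner_neq0 ?denom_ratioP ?mul1r ?mulr1 //; first by rewrite mulrC.
all: exact: denom_ratioP.
Qed.

Section FracExt.
Variables (D : idomainType) (F : fieldType) (g : {rmorphism D -> F}).
Hypothesis ginj : injective g.

Definition fext (x : {fraction D}) : F := g (repr x).1 / g (repr x).2.
Definition fexti (gi : injective g) := fext.

Lemma gneq0 b : b != 0 -> g b != 0.
Proof. by rewrite (raddf_eq0 _ ginj). Qed.

Lemma fextE a b : b != 0 -> fext (a%:F / b%:F) = g a / g b.
Proof.
move=> b0; rewrite /fext.
set x := a%:F / b%:F.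
have d0 : (repr x).2 != 0 := denom_ratioP _.
have ex : x = (repr x).1%:F / (repr x).2%:F.
  rewrite -[x in LHS]reprK; unlock FracField.tofrac.
  rewrite /GRing.mul /= /GRing.inv /=.
  rewrite -FracField.pi_inv -FracField.pi_mul.
  apply/eqmodP; rewrite /= FracField.equivfE /FracField.mulf /FracField.invf /=.
  rewrite !numden_Ratio ?oner_neq0 ?denom_ratioP ?mul1r ?mulr1 //; first by rewrite mulrC.
  all: try exact: denom_ratioP.
have : (repr x).1%:F / (repr x).2%:F == a%:F / b%:F by rewrite -ex.
rewrite eqr_div ?tofrac_eq0 // -!tofracM tofrac_eq => /eqP e.
by apply/eqP; rewrite eqr_div ?gneq0 // -!rmorphM e.
Qed.

Lemma divB_gen (K : fieldType) (a b c d : K) : b != 0 -> d != 0 ->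
  a / b - c / d = (a * d - c * b) / (b * d).
Proof. by move=> b0 d0; field; rewrite b0 d0. Qed.
Lemma divM_gen (K : fieldType) (a b c d : K) :
  a / b * (c / d) = (a * c) / (b * d).
Proof. by rewrite mulrACA invfM. Qed.

Lemma fext_zmod : GRing.zmod_morphism (fexti ginj).
Proof. rewrite /fexti.
move=> x y; have [a [b [b0 ->]]] := frac_repr x; have [c [d [d0 ->]]] := frac_repr y.
rewrite divB_gen ?tofrac_eq0 // -!tofracM -tofracB.
rewrite !fextE ?mulf_neq0 // rmorphB !rmorphM divB_gen ?gneq0 //.
Qed.

Lemma fext_monoid : GRing.monoid_morphism (fexti ginj).
Proof. rewrite /fexti.
split.
  have -> : (1 : {fraction D}) = 1%:F / 1%:F by rewrite tofrac1 divr1.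
  by rewrite fextE ?oner_neq0 // rmorph1 divr1.
move=> x y; have [a [b [b0 ->]]] := frac_repr x; have [c [d [d0 ->]]] := frac_repr y.
rewrite divM_gen -!tofracM.
by rewrite !fextE ?mulf_neq0 // !rmorphM divM_gen.
Qed.

HB.instance Definition _ := GRing.isZmodMorphism.Build _ _ (fexti ginj) fext_zmod.
HB.instance Definition _ := GRing.isMonoidMorphism.Build _ _ (fexti ginj) fext_monoid.

Lemma fext_tofrac a : fexti ginj a%:F = g a.
Proof. rewrite /fexti.
have -> : a%:F = a%:F / 1%:F by rewrite tofrac1 divr1.
by rewrite fextE ?oner_neq0 // rmorph1 divr1.
Qed.
End FracExt.

Lemma rank_witness (K : fieldType) p q s (A : 'M[K]_(p,q)) :
  (s <= \rank A)%N -> exists X : 'M_(s,p), exists Y : 'M_(q,s), \det (X *m A *m Y) != 0.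
Proof.
move=> hs.
exists (pid_mx s *m invmx (col_ebase A)), (invmx (row_ebase A) *m pid_mx s).
have hp := rank_leq_row A; have hq := rank_leq_col A.
move: (col_ebase_unit A) (row_ebase_unit A) (mulmx_ebase A).
set C := col_ebase A; set Rm := row_ebase A; set r := \rank A => uC uR hA.
rewrite -hA !mulmxA mulmxKV //.
rewrite -[_ *m Rm *m _]mulmxA mulmxV // mulmx1.
rewrite !mul_pid_mx.
have -> : minn q (minn (minn p (minn s r)) s) = s by rewrite /r in hp hq *; lia.
by rewrite pid_mx_1 det1 oner_neq0.
Qed.

Lemma witness_rank (K : fieldType) p q s (A : 'M[K]_(p,q)) (X : 'M_(s,p)) (Y : 'M_(q,s)) :
  \det (X *m A *m Y) != 0 -> (s <= \rank A)%N.
Proof.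
move=> hd.
have hu : X *m A *m Y \in unitmx by rewrite unitmxE unitfE.
rewrite -{1}(mxrank_unit hu).
exact: leq_trans (mxrankM_maxl _ _) (mxrankM_maxr _ _).
Qed.

Lemma poly_nonroot_nat (K : numFieldType) (P : {poly K}) :
  P != 0 -> exists c : nat, P.[c%:R] != 0.
Proof.
move=> P0.
set rs := [seq (j%:R : K) | j <- iota 0 (size P)].
have urs : uniq rs.
  rewrite map_inj_uniq ?iota_uniq // => a b /eqP; by rewrite eqr_nat => /eqP.
have : ~~ all (root P) rs.
  apply/negP => hall; have := max_poly_roots P0 hall urs.
  by rewrite size_map size_iota ltnn.
case/allPn => x /mapP [j _ ->] hj; exists j; exact: hj.
Qed.

Lemma step_core (K : numFieldType) n p q s (F : 'rV[K]_n -> 'M[K]_(p,q))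
  (hF : forall u v a, F (u + a *: v) = F u + a *: F v) (w : 'rV[K]_n) (i : 'I_n) :
  (s <= \rank (F w))%N ->
  exists c : nat, (s <= \rank (F (w + (c%:R - w 0 i) *: delta_mx 0 i)%R))%N.
Proof.
move=> /rank_witness [X [Y hd]].
set e := delta_mx 0 i : 'rV[K]_n.
set G0 := X *m F w *m Y; set G1 := X *m F e *m Y.
have hG : forall t, X *m F (w + (t - w 0 i) *: e) *m Y = G0 + (t - w 0 i) *: G1.
  move=> t; rewrite hF mulmxDr mulmxDl -scalemxAr -scalemxAl //.
set M := map_mx polyC G0 + ('X - (w 0 i)%:P) *: map_mx polyC G1.
have hM : forall t, (\det M).[t] = \det (G0 + (t - w 0 i) *: G1).
  move=> t; rewrite -[_.[t]]/(horner_eval t (\det M)) -det_map_mx; congr (\det _).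
  apply/matrixP => a b; rewrite mxE; transitivity ((M a b).[t]); first exact: horner_evalE.
  by rewrite /M !mxE !hornerE.
have M0 : \det M != 0.
  apply/eqP => h; move: hd; have := hM (w 0 i).
  rewrite h horner0 subrr scale0r addr0 /G0 => E.
  by rewrite -E eqxx.
have [c hc] := poly_nonroot_nat M0.
exists c; apply: (witness_rank (X := X) (Y := Y)).
by rewrite hG -hM.
Qed.

Lemma core_nat (K : numFieldType) n p q s (F : 'rV[K]_n -> 'M[K]_(p,q))
  (hF : forall u v a, F (u + a *: v) = F u + a *: F v) (w : 'rV[K]_n) :
  (s <= \rank (F w))%N ->
  exists w' : 'rV[K]_n, (forall i, exists c : nat, w' 0 i = c%:R) /\ (s <= \rank (F w'))%N.
Proof.
move=> hw.
suff : forall j, (j <= n)%N -> exists w' : 'rV[K]_n,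
    (forall i : 'I_n, (i < j)%N -> exists c : nat, w' 0 i = c%:R) /\ (s <= \rank (F w'))%N.
  case/(_ n (leqnn n)) => w' [h1 h2]; exists w'; split => // i; exact: h1.
elim=> [_|j IH hj]; first by exists w.
have [w' [h1 h2]] := IH (ltnW hj).
pose i0 := Ordinal hj.
have [c hc] := step_core hF i0 h2.
exists (w' + (c%:R - w' 0 i0) *: delta_mx 0 i0); split => // i hi.
rewrite !mxE.
have [ei|nei] := eqVneq i i0.
  by exists c; rewrite ei eqxx mulr1 addrC subrK.
rewrite andbF mulr0 addr0.
apply: h1; rewrite ltnS leq_eqVlt in hi; case/orP: hi => // /eqP hi.
by case/eqP: nei; apply: val_inj.
Qed.


Section Arr.
Variables (n p q : nat) (pos : 'I_n -> 'I_p * 'I_q).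

Definition arrK (K : nzRingType) (v : 'cV[K]_n) : 'M[K]_(p, q) :=
  \matrix_(i < p, j < q) \sum_(l < n | pos l == (i, j)) v l 0.

Lemma arrange_map (K : nzRingType) (R : realType) (f : {rmorphism K -> R}) (v : 'cV[K]_n) :
  arrange pos (map_mx f v) = map_mx f (arrK v).
Proof.
apply/matrixP => i j; rewrite !mxE rmorph_sum; apply: eq_bigr => l _; by rewrite mxE.
Qed.

Lemma arrange_lin (R : realType) (m1 m2 : 'cV[R]_n) (a : R) :
  arrange pos (m1 + a *: m2) = arrange pos m1 + a *: arrange pos m2.
Proof.
apply/matrixP => i j; rewrite !mxE mulr_sumr -big_split; apply: eq_bigr => l _.
by rewrite !mxE.
Qed.
End Arr.

Section Main.
Variable R : realType.

Definition ev N (rho : 'I_N -> R) : {mpoly rat[N]} -> R :=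
  (meval rho) \o (map_mpoly (ratr : rat -> R)).

Lemma ev_inj N (rho : 'I_N -> R) : generic rho -> injective (ev rho).
Proof.
move=> hg x y exy; apply/eqP; rewrite -subr_eq0; apply/negPn/negP => h.
move: exy; rewrite /ev /= => exy.
by have := hg _ h; rewrite /evalQ rmorphB mevalB exy subrr eqxx.
Qed.

End Main.

Theorem propositionA1 (R : realType) (N n k p q : nat)
  (hN : (1 <= N)%N) (hn : (1 <= n)%N)
  (C : 'M[{mpoly rat[N]}]_(k, n))
  (pos : 'I_n -> 'I_p * 'I_q) (pos_inj : injective pos)
  (s : nat) (rho0 : 'I_N -> R) (m0 : 'cV[R]_n) :
  generic rho0 ->
  evalmx C rho0 *m m0 = 0 ->
  \rank (arrange pos m0) = s ->
  forall rho : 'I_N -> R, generic rho ->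
    exists m : 'cV[R]_n, evalmx C rho *m m = 0 /\ (s <= \rank (arrange pos m))%N.
Proof.
move=> g0 hm0 hr rho g.
pose CK : 'M[{fraction {mpoly rat[N]}}]_(k, n) := map_mx (@FracField.tofrac _) C.
pose phi0 := fexti (ev_inj g0).
pose phi := fexti (ev_inj g).
have hC : forall (r : 'I_N -> R) (gr : generic r), map_mx (fexti (ev_inj gr)) CK = evalmx C r.
  by move=> r gr; rewrite /evalmx; apply/matrixP => i j; rewrite !mxE fext_tofrac.
pose B := kermx CK^T.
have hB : B *m CK^T = 0 by exact: mulmx_ker.
have : (m0^T <= kermx (evalmx C rho0)^T)%MS.
  by rewrite sub_kermx -trmx_mul hm0 trmx0.
rewrite -(hC _ g0) map_trmx -map_kermx => /submxP [w hw].
pose FR := fun v : 'rV[R]_n => arrange pos (v *m map_mx phi0 B)^T.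
have hF : forall u v a, FR (u + a *: v) = FR u + a *: FR v.
  by move=> u v a; rewrite /FR mulmxDl -scalemxAl linearD linearZ /= arrange_lin.
have hw0 : (s <= \rank (FR w))%N by rewrite /FR -hw trmxK hr.
have [w' [hw'1 hw'2]] := core_nat hF hw0.
have [f hf] := fin_all_exists hw'1.
pose wK : 'rV[{fraction {mpoly rat[N]}}]_n := \row_i (f i)%:R.
have hwK : forall (r : 'I_N -> R) (gr : generic r), map_mx (fexti (ev_inj gr)) wK = \row_i (f i)%:R.
  by move=> r gr; apply/matrixP => i j; rewrite !mxE rmorph_nat.
have ew' : w' = \row_i (f i)%:R by apply/matrixP => i j; rewrite !mxE (ord1 i) hf.
pose vK := wK *m B.
exists (map_mx phi vK)^T; split.
  rewrite -(hC _ g) map_trmx -map_mxM /vK trmx_mul mulmxA (_ : CK *m B^T = 0) ?mul0mx ?map_mx0 //.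
  by rewrite -[CK]trmxK -trmx_mul hB trmx0.
rewrite map_trmx arrange_map mxrank_map.
rewrite -(mxrank_map phi0) -arrange_map -map_trmx /vK map_mxM (hwK _ g0) -ew'.
exact: hw'2.
Qed.
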